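(* Let $X=\{x_1,\dots,x_n\}$ and $Z=\{z_1,\dots,z_n\}$ be sets equipped with symmetric non-negative functions $d_X\colon X\times X\to\mathbb{R}^+$ and $d_Z\colon Z\times Z\to\mathbb{R}^+$, and let $f_\bullet\colon X\to Z$ be the bijection $x_i\mapsto z_i$. Then for all $a,b\in\mathbb{R}^+$, \[ \sum_{b'\in\mathbb{R}^+}\mathcal{M}^0_f(a,b')=m^X(a)\qquad\text{and}\qquad\sum_{a'\in\mathbb{R}^+}\mathcal{M}^0_f(a',b)=m^Z(b). \]
   Context: $\mathbb{R}^+=[0,\infty)$; the functions $d_X,d_Z$ may vanish on distinct points and need not satisfy the triangle inequality. For a finite set $Y=\{y_1,\dots,y_n\}$ with symmetric non-negative $d_Y$ and $r\ge 0$, let $G_r(Y)$ be the graph on $Y$ with an edge $[y,y']$ ($y\ne y'$) whenever $d_Y(y,y')\le r$ (for $r>0$ this is the Vietoris–Rips graph $\mathrm{VR}_r(Y)$; $\mathrm{VR}_0(Y)$ has no edges). $H_0(\mathrm{VR}_0(Y))$ is the $\mathbb{Z}_2$-vector space with basis $[y_1],\dots,[y_n]$. For $b\ge0$, $\ker^+_b(Y)$ is the span of all $[y]+[y']$ with $y,y'$ in the same connected component of $G_b(Y)$; $\ker^-_0(Y)=0$ and for $b>0$, $\ker^-_b(Y)$ is the span of all $[y]+[y']$ with $y,y'$ in the same component of $G_r(Y)$ for some $0\le r<b$. For $j\in\{2,\dots,n\}$ the death value $b_j$ of $y_j$ is the least $r\ge0$ such that $y_j$ is in the same component of $G_r(Y)$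 as some $y_i$ with $i<j$; for $a\ge 0$, $m^Y(a)$ is the number of $j\in\{2,\dots,n\}$ with $b_j=a$. $f_0\colon H_0(\mathrm{VR}_0(X))\to H_0(\mathrm{VR}_0(Z))$ is the linear isomorphism $[x_i]\mapsto[z_i]$, and \[ \mathcal{M}^0_f(a,b)=\dim\frac{f_0(\ker^+_a(X))\cap\ker^+_b(Z)}{f_0(\ker^-_a(X))\cap\ker^+_b(Z)+f_0(\ker^+_a(X))\cap\ker^-_b(Z)},\quad a,b\in\mathbb{R}^+. \] (Only finitely many terms of each sum are nonzero.) *)

(* Defs.v *)
From HB Require Import structures.
From mathcomp Require Import all_boot all_order all_algebra.
From Stdlib Require Import ClassicalEpsilon.
Set Implicit Arguments. Unset Strict Implicit. Unset Printing Implicit Defensive.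
Import Order.TTheory GRing.Theory Num.Theory.
Local Open Scope ring_scope.

Definition pbool (P : Prop) : bool :=
  if excluded_middle_informative P then true else false.

Section Defs.
Variable R : realFieldType.
Variable n : nat.

(* Points y_1..y_n are indexed by 'I_n (0-based). *)
Definition Gedge (d : 'I_n -> 'I_n -> R) (r : R) : rel 'I_n :=
  fun i j => (i != j) && (d i j <= r).

Definition samecomp (d : 'I_n -> 'I_n -> R) (r : R) (i j : 'I_n) : bool :=
  connect (Gedge d r) i j.

(* H_0(VR_0(Y)) = Z_2^n, [y_i] = i-th standard basis row vector. *)
Definition gen (i : 'I_n) : 'rV['F_2]_n := delta_mx 0 i.

Definition kerp (d : 'I_n -> 'I_n -> R) (b : R) : 'M['F_2]_n :=
  (\sum_(i : 'I_n) \sum_(j : 'I_n | samecomp d b i j) <<gen i + gen j>>)%MS.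

Definition samecomp_below (d : 'I_n -> 'I_n -> R) (b : R) (i j : 'I_n) : bool :=
  pbool (exists r : R, 0 <= r /\ r < b /\ samecomp d r i j).

Definition kerm (d : 'I_n -> 'I_n -> R) (b : R) : 'M['F_2]_n :=
  if b == 0 then 0 else
  (\sum_(i : 'I_n) \sum_(j : 'I_n | samecomp_below d b i j)
     <<gen i + gen j>>)%MS.

(* f_0 : [x_i] |-> [z_i]; in the standard bases it is the identity matrix.
   The image of a subspace A under f_0 is (A *m f0)%MS. *)
Definition f0 : 'M['F_2]_n := 1%:M.

(* dim (U / W) for W <= U is \rank U - \rank W. *)
Definition M0 (dX dZ : 'I_n -> 'I_n -> R) (a b : R) : nat :=
  let A := (kerp dX a *m f0)%MS in
  let C := (kerm dX a *m f0)%MS in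
  let B := kerp dZ b in
  let D := kerm dZ b in
  (\rank (A :&: B)%MS - \rank ((C :&: B) + (A :&: D))%MS)%N.

(* death value: b is the least r >= 0 such that y_j is in the same component
   of G_r(Y) as some y_i with i < j *)
Definition death_pred (d : 'I_n -> 'I_n -> R) (j : 'I_n) (r : R) : Prop :=
  exists i : 'I_n, (i < j)%N /\ samecomp d r i j.

Definition is_death (d : 'I_n -> 'I_n -> R) (j : 'I_n) (b : R) : Prop :=
  [/\ 0 <= b, death_pred d j b & forall r, 0 <= r -> death_pred d j r -> b <= r].

(* m^Y(a): number of j in {2..n} (0-based: j >= 1) with b_j = a *)
Definition mult (d : 'I_n -> 'I_n -> R) (a : R) : nat :=
  #|[set j : 'I_n | (0 < j)%N && pbool (is_death d j a)]|.

End Defs.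

(* "sum_{x in R^+} F x = v", where only finitely many terms are nonzero:
   there is a duplicate-free finite list of nonnegative reals containing
   every x >= 0 with F x <> 0, and the sum over it is v. *)
Definition has_fsum (R : realFieldType) (F : R -> nat) (v : nat) : Prop :=
  exists s : seq R,
    [/\ uniq s, all (fun x => 0 <= x) s,
        (forall x, 0 <= x -> F x != 0%N -> x \in s)
      & (\sum_(x <- s) F x)%N = v].

(* Main.v *)
Require Import Defs.
From HB Require Import structures.
From mathcomp Require Import all_boot all_order all_algebra.
From Stdlib Require Import ClassicalEpsilon.
From mathcomp Require Import zify.
Import Order.TTheory GRing.Theory Num.Theory.
Local Open Scope ring_scope.
Set Implicit Arguments. Unset Strict Implicit. Unset Printing Implicit Defensive.

Lemma pboolP (P : Prop) : reflect P (pbool P).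
Proof. rewrite /pbool; case: excluded_middle_informative => h; by constructor. Qed.

Lemma rv2 n (v : 'rV['F_2]_n) : v + v = 0.
Proof. apply/rowP => j; rewrite !mxE; apply: addrr_pchar2; exact: pchar_Fp. Qed.

Definition Pset (R : realFieldType) n (d : 'I_n -> 'I_n -> R) r :=
  [set j : 'I_n | [exists i : 'I_n, (i < j)%N && samecomp d r i j]].

Lemma rank_sums_le (F : fieldType) k (I : finType) (P : pred I) (A_ : I -> 'M[F]_k) :
  (\rank (\sum_(i | P i) A_ i)%MS <= \sum_(i | P i) \rank (A_ i))%N.
Proof.
elim/big_rec2: _ => [|i m M _ IH]; first by rewrite mxrank0.
apply: leq_trans (mxrank_adds_leqif _ _).1 _.
by rewrite leq_add2l.
Qed.

Section Rank.
Variables (R : realFieldType) (n : nat) (d : 'I_n -> 'I_n -> R) (r : R).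
Hypothesis dsym : forall i j, d i j = d j i.

Local Notation c := (samecomp d r).

Lemma c_sym : symmetric c.
Proof.
apply: sym_connect_sym => i j; rewrite /Gedge eq_sym dsym //.
Qed.

Definition mrep (j : 'I_n) : 'I_n := [arg min_(i < j | c j i) (i : nat)].

Lemma mrep_spec j : c j (mrep j) /\ forall i, c j i -> (mrep j <= i)%N.
Proof.
rewrite /mrep; case: arg_minnP; first exact: connect0.
by move=> i ci H; split.
Qed.

Lemma mrep_eq i j : c i j -> mrep i = mrep j.
Proof.
move=> cij; have [ci hi] := mrep_spec i; have [cj hj] := mrep_spec j.
apply/val_inj/eqP; rewrite eqn_leq; apply/andP; split.
  apply: hi; exact: connect_trans cij cj.
apply: hj; rewrite c_sym in cij; exact: connect_trans cij ci.
Qed.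

Lemma PsetE j : (j \in Pset d r) = (mrep j != j).
Proof.
have [cj hj] := mrep_spec j.
rewrite inE; apply/existsP/idP.
  case=> i /andP[lij cij]; rewrite c_sym in cij.
  have := hj _ cij => le; apply/eqP => e; move: le; rewrite e; rewrite leqNgt lij.
  done.
move=> ne; exists (mrep j); rewrite c_sym cj andbT ltn_neqAle hj ?connect0 // ?andbT.
exact: ne. exact: connect0.
Qed.

Lemma mrep_le j : (mrep j <= j)%N.
Proof. by have [_ h] := mrep_spec j; apply: h; apply: connect0. Qed.

Lemma mrep_idem j : mrep (mrep j) = mrep j.
Proof. by symmetry; apply: mrep_eq; case: (mrep_spec j). Qed.

Lemma mrep_notP j : mrep j \notin Pset d r.
Proof. by rewrite PsetE mrep_idem eqxx. Qed.

Definition w j := gen j + gen (mrep j).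

Lemma w_notP j : j \notin Pset d r -> w j = 0.
Proof. rewrite PsetE negbK. move=> /eqP e. rewrite /w e. exact: rv2. Qed.

Definition Q := (\sum_(j in Pset d r) <<w j>>)%MS.

Lemma w_sub j : (w j <= Q)%MS.
Proof.
case: (boolP (j \in Pset d r)) => jP; last by rewrite w_notP // sub0mx.
by apply: (sumsmx_sup j) => //; rewrite genmxE.
Qed.

Lemma kerp_eqQ : (kerp d r == Q)%MS.
Proof.
apply/andP; split.
  apply/sumsmx_subP => i _; apply/sumsmx_subP => j cij; rewrite genmxE.
  have -> : gen i + gen j = w i + w j.
    rewrite /w (mrep_eq cij) addrACA rv2 addr0 //.
  by rewrite addmx_sub // w_sub.
apply/sumsmx_subP => j jP; rewrite genmxE.
apply: (sumsmx_sup j) => //; apply: (sumsmx_sup (mrep j)).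
  by have [] := mrep_spec j.
by rewrite genmxE.
Qed.

Definition E : 'M['F_2]_n := diag_mx (\row_k ((k \in Pset d r)%:R : 'F_2)).

Lemma wE j : j \in Pset d r -> w j *m E = gen j.
Proof.
move=> jP; rewrite mul_mx_diag; apply/rowP => k; rewrite !mxE.
have nP := mrep_notP j.
case: (eqVneq j k) => [<-|njk].
  rewrite jP eqxx /= mulr1.
  have : mrep j != j by rewrite -PsetE.
  by rewrite eq_sym => /negPf ->; rewrite addr0.
case: (eqVneq (mrep j) k) => [<-|nmk].
  by rewrite (negPf nP) mulr0 andbF.
by rewrite andbF add0r mul0r.
Qed.

Lemma rank_kerp : \rank (kerp d r) = #|Pset d r|.
Proof.
rewrite (eqmx_rank kerp_eqQ); apply/eqP; rewrite eqn_leq; apply/andP; split.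
  rewrite /Q; apply: leq_trans (rank_sums_le (fun j => j \in Pset d r) (fun j => <<w j>>%MS)) _.
  rewrite -sum1_card; apply: leq_sum => j _; rewrite mxrank_gen; exact: rank_leq_row.
apply: leq_trans (mxrankM_maxl _ E).
have: mxdirect (\sum_(j in Pset d r) <<delta_mx 0 (id j) : 'rV['F_2]_n>>).
  by apply: mxdirect_delta => ? ? ? ?.
move/mxdirectP => /= Hr.
have -> : #|Pset d r| = \rank (\sum_(j in Pset d r) <<delta_mx 0 j : 'rV['F_2]_n>>)%MS.
  rewrite Hr -sum1_card; apply: eq_bigr => j _; by rewrite mxrank_gen mxrank_delta.
apply: mxrankS; apply/sumsmx_subP => j jP; rewrite genmxE.
rewrite -[delta_mx 0 j]/(gen j) -(wE jP); apply: submxMr; exact: w_sub.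
Qed.
End Rank.

Section Thr.
Variables (R : realFieldType) (n : nat).
Implicit Types (d : 'I_n -> 'I_n -> R).

Definition thr d : seq R := 0 :: [seq d ij.1 ij.2 | ij <- enum [set: ('I_n * 'I_n)%type]].

Lemma thr_d d i j : d i j \in thr d.
Proof. rewrite inE; apply/orP; right. apply/mapP; exists (i, j); rewrite ?mem_enum ?inE //. Qed.

Lemma thr_0 d : 0 \in thr d.
Proof. by rewrite inE eqxx. Qed.

Lemma thr_ge0 d : (forall i j, 0 <= d i j) -> forall x, x \in thr d -> 0 <= x.
Proof.
move=> h x; rewrite inE => /orP[/eqP -> //|/mapP[[i j] _ ->]]; exact: h.
Qed.

Lemma samecomp_mono d r r' : (forall i j, d i j <= r -> d i j <= r') ->
  forall i j, samecomp d r i j -> samecomp d r' i j.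
Proof.
move=> H; apply: connect_sub => i j /andP[ne le]; apply: connect1.
by rewrite /Gedge ne (H _ _ le).
Qed.

Lemma kerp_ext d r r' : (forall i j, (d i j <= r) = (d i j <= r')) -> kerp d r = kerp d r'.
Proof.
move=> H; rewrite /kerp; apply: eq_bigr => i _; apply: eq_bigl => j.
by rewrite /samecomp; apply: eq_connect => x y; rewrite /Gedge H.
Qed.

Lemma kerm_thr d b t : (forall i j, 0 <= d i j) -> 0 < b -> t \in thr d -> t < b ->
  (forall x, x \in thr d -> x < b -> x <= t) -> kerm d b = kerp d t.
Proof.
move=> d0 hb tT tb H; rewrite /kerm (gt_eqF hb) /=.
apply: eq_bigr => i _; apply: eq_bigl => j; apply/pboolP/idP.
  case=> r' [r0 [rb sc]]; apply: samecomp_mono sc => x y le.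
  by apply: H; [exact: thr_d | exact: le_lt_trans le rb].
by move=> sc; exists t; split; [exact: thr_ge0 tT | split].
Qed.

Lemma kerp_thr d b t : t \in thr d -> t <= b ->
  (forall x, x \in thr d -> x <= b -> x <= t) -> kerp d b = kerp d t.
Proof.
move=> tT tb H; apply: kerp_ext => i j; apply/idP/idP => h.
  by apply: H => //; exact: thr_d.
exact: le_trans h tb.
Qed.

Lemma exists_max (s : seq R) (p : pred R) : has p s ->
  exists t, [/\ t \in s, p t & forall x, x \in s -> p x -> x <= t].
Proof.
elim: s => //= y s IH.
case: (boolP (has p s)) => hs.
  have [t [ts pt ht]] := IH hs => _.
  case: (boolP (p y)) => py.
    case: (leP y t) => yt.
      exists t; split; rewrite ?inE ?ts ?orbT // => x; rewrite inE => /orP[/eqP ->|] //.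
      exact: ht.
    exists y; split; rewrite ?inE ?eqxx // => x; rewrite inE => /orP[/eqP -> //|xs px].
    exact: le_trans (ht x xs px) (ltW yt).
  exists t; split; rewrite ?inE ?ts ?orbT // => x; rewrite inE => /orP[/eqP ->|].
    by rewrite (negPf py).
  exact: ht.
rewrite orbF => py; exists y; split; rewrite ?inE ?eqxx // => x.
rewrite inE => /orP[/eqP -> //|xs px].
by move/hasPn: hs => /(_ x xs); rewrite px.
Qed.

End Thr.

Section Mult.
Variables (R : realFieldType) (n : nat) (d : 'I_n -> 'I_n -> R).
Hypothesis dsym : forall i j, d i j = d j i.
Hypothesis d0 : forall i j, 0 <= d i j.

Lemma death_predP j r : death_pred d j r <-> j \in Pset d r.
Proof.
rewrite inE; split.
  by case=> i [lt sc]; apply/existsP; exists i; rewrite lt sc.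
by case/existsP => i /andP[lt sc]; exists i.
Qed.

Lemma PsetS r r' : r <= r' -> Pset d r \subset Pset d r'.
Proof.
move=> le; apply/subsetP => j; rewrite !inE => /existsP[i /andP[lt sc]].
apply/existsP; exists i; rewrite lt /=; apply: samecomp_mono sc => x y h.
exact: le_trans h le.
Qed.

Lemma Pset_pos r j : j \in Pset d r -> (0 < j)%N.
Proof. by rewrite inE => /existsP[i /andP[lt _]]; apply: leq_ltn_trans lt. Qed.

Lemma mult_eq a : 0 <= a ->
  mult d a = (\rank (kerp d a) - \rank (kerm d a))%N.
Proof.
move=> ha; rewrite rank_kerp //.
case: (eqVneq a 0) => [a0|an0].
  rewrite /kerm a0 eqxx mxrank0 subn0; apply: eq_card => j; rewrite !inE.
  apply/andP/idP.
    by case=> _ /pboolP[_ /death_predP]; rewrite inE.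
  move=> h; have hP : j \in Pset d 0 by rewrite inE.
  split; first exact: Pset_pos hP.
  by apply/pboolP; split => //; apply/death_predP.
have apos : 0 < a by rewrite lt_def an0 ha.
have [t [tT tlt tmax]] := @exists_max R (thr d) (fun x => x < a)
  (introT hasP (ex_intro2 _ _ 0 (thr_0 d) apos)).
rewrite (kerm_thr d0 apos tT tlt tmax) rank_kerp //.
have sub : Pset d t \subset Pset d a by apply: PsetS; exact: ltW.
rewrite -(setIidPr sub) -cardsD /mult; apply: eq_card => j; rewrite in_setD in_set.
apply/andP/andP.
  case=> jpos /pboolP[_ /death_predP ja hmin]; split => //.
  apply/negP => /death_predP jt.
  have := hmin t (thr_ge0 d0 tT) jt; rewrite leNgt tlt //.
case=> njt ja; split; first exact: Pset_pos ja.
apply/pboolP; split => //; first exact/death_predP.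
move=> r r0 /death_predP jr; rewrite leNgt; apply/negP => ra.
move/negP: njt; apply; move: jr; rewrite !inE => /existsP[i /andP[lt sc]].
apply/existsP; exists i; rewrite lt /=; apply: samecomp_mono sc => x y h.
apply: tmax; [exact: thr_d | exact: le_lt_trans h ra].
Qed.
End Mult.

Lemma rank_id (F : fieldType) k (A C B D : 'M[F]_k) : (C <= A)%MS -> (D <= B)%MS ->
  (\rank (A :&: B) - \rank (C :&: B + A :&: D))%N =
  (\rank (A :&: B + C) - \rank (A :&: D + C))%N.
Proof.
move=> CA DB.
have e1 := mxrank_sum_cap (A :&: B)%MS C.
have e2 := mxrank_sum_cap (A :&: D)%MS C.
have e3 := mxrank_sum_cap (C :&: B)%MS (A :&: D)%MS.
have r1 : \rank (A :&: B :&: C)%MS = \rank (C :&: B)%MS.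
  apply: eqmx_rank; apply/andP; split; rewrite !sub_capmx ?capmxSr //=.
    exact: submx_trans (capmxSl _ _) (capmxSr _ _).
  by rewrite ?andbT (submx_trans (capmxSl _ _) CA) capmxSl.
have r2 : \rank (A :&: D :&: C)%MS = \rank (C :&: D)%MS.
  apply: eqmx_rank; apply/andP; split; rewrite !sub_capmx ?capmxSr //=.
    exact: submx_trans (capmxSl _ _) (capmxSr _ _).
  by rewrite ?andbT (submx_trans (capmxSl _ _) CA) capmxSl.
have r3 : \rank (C :&: B :&: (A :&: D))%MS = \rank (C :&: D)%MS.
  apply: eqmx_rank; apply/andP; split; rewrite !sub_capmx.
    by rewrite (submx_trans (capmxSl _ _) (capmxSl _ _)) (submx_trans (capmxSr _ _) (capmxSr _ _)).
  rewrite capmxSl (submx_trans (capmxSr _ _) DB) (submx_trans (capmxSl _ _) CA) capmxSr //.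
have i1 : (\rank (C :&: B + A :&: D)%MS <= \rank (A :&: B)%MS)%N.
  apply: mxrankS; rewrite addsmx_sub !sub_capmx (submx_trans (capmxSl _ _) CA) capmxSr.
  by rewrite capmxSl (submx_trans (capmxSr _ _) DB).
have i2 : (\rank (A :&: D + C)%MS <= \rank (A :&: B + C)%MS)%N.
  apply: mxrankS; apply: addsmxS => //; apply: capmxS => //.
rewrite r1 in e1; rewrite r2 in e2; rewrite r3 in e3.
have i3 : (\rank (C :&: D)%MS <= \rank (C :&: B)%MS)%N by apply: mxrankS; apply: capmxS.
lia.
Qed.

Lemma tele (h : nat -> nat) N : (forall i, (i < N)%N -> (h i <= h i.+1)%N) ->
  (\sum_(i < N) (h i.+1 - h i))%N = (h N - h 0)%N.
Proof.
elim: N => [|N IH] H; first by rewrite big_ord0 subnn.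
rewrite big_ord_recr /= IH; last by move=> i iN; apply: H; exact: ltnW.
have h0N : (h 0 <= h N)%N.
  elim: N {IH} H => // N IH H; apply: leq_trans (IH _) (H _ _) => //.
  by move=> i iN; apply: H; exact: ltnW.
have := H N (ltnSn N); lia.
Qed.

Section Main.
Variables (R : realFieldType) (n : nat).

Lemma kerp_top (d1 d2 : 'I_n -> 'I_n -> R) a r : (forall i j, d2 i j <= r) ->
  (kerp d1 a <= kerp d2 r)%MS.
Proof.
move=> H; apply/sumsmx_subP => i _; apply/sumsmx_subP => j _.
apply: (sumsmx_sup i) => //; apply: (sumsmx_sup j) => //.
case: (eqVneq i j) => [->|ne]; first exact: connect0.
by apply: connect1; rewrite /Gedge ne H.
Qed.

Lemma kerp_mono (d : 'I_n -> 'I_n -> R) r r' : r <= r' -> (kerp d r <= kerp d r')%MS.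
Proof.
move=> le; apply/sumsmx_subP => i _; apply/sumsmx_subP => j sc.
apply: (sumsmx_sup i) => //; apply: (sumsmx_sup j) => //.
by apply: samecomp_mono sc => x y h; exact: le_trans h le.
Qed.

Lemma kerm_sub (d : 'I_n -> 'I_n -> R) a : (kerm d a <= kerp d a)%MS.
Proof.
rewrite /kerm; case: eqP => _; first exact: sub0mx.
apply/sumsmx_subP => i _; apply/sumsmx_subP => j /pboolP[r [r0 [ra sc]]].
apply: (sumsmx_sup i) => //; apply: (sumsmx_sup j) => //.
by apply: samecomp_mono sc => x y h; exact: le_trans h (ltW ra).
Qed.

Lemma part1 (dX dZ : 'I_n -> 'I_n -> R)
  (dX_sym : forall i j, dX i j = dX j i) (dX_ge0 : forall i j, 0 <= dX i j)
  (dZ_ge0 : forall i j, 0 <= dZ i j) a (ha : 0 <= a) :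
  has_fsum (fun b' => M0 dX dZ a b') (mult dX a).
Proof.
set A := kerp dX a; set C := kerm dX a.
have CA : (C <= A)%MS by exact: kerm_sub.
have M0E b : M0 dX dZ a b =
   (\rank (A :&: kerp dZ b) - \rank (C :&: kerp dZ b + A :&: kerm dZ b))%N.
  by rewrite /M0 /f0 !mulmx1.
pose s := sort <=%R (undup (thr dZ)).
have s_uniq : uniq s by rewrite sort_uniq undup_uniq.
have s_mem x : (x \in s) = (x \in thr dZ) by rewrite mem_sort mem_undup.
have s_sorted : sorted <%R s by rewrite sort_lt_sorted undup_uniq.
have s_ge0 x : x \in s -> 0 <= x by rewrite s_mem; exact: thr_ge0.
exists s; split => //.
- by apply/allP => x; exact: s_ge0.
- move=> x x0; apply: contraR => xs; rewrite M0E.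
  have [t [tT tle tmax]] := @exists_max R (thr dZ) (fun y => y <= x)
    (introT hasP (ex_intro2 _ _ 0 (thr_0 dZ) x0)).
  have tx : t < x.
    rewrite lt_def tle andbT; apply/eqP => e; move: xs; rewrite s_mem e tT //.
  have xpos : 0 < x by exact: le_lt_trans (thr_ge0 dZ_ge0 tT) tx.
  rewrite (kerm_thr dZ_ge0 xpos tT tx (fun y yT yx => tmax y yT (ltW yx))).
  rewrite (kerp_thr tT (ltW tx) tmax).
  by apply/eqP; apply/eqP; rewrite subn_eq0; apply: mxrankS; exact: addsmxSr.
rewrite (mult_eq dX_sym dX_ge0 ha) -/A -/C.
set N := size s.
have N0 : (0 < N)%N by rewrite /N; case: (s) (s_mem 0) => //; rewrite thr_0.
have slt i j : (i < j)%N -> (j < N)%N -> s`_i < s`_j.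
  move=> ij jN; apply: (sorted_ltn_nth lt_trans) => //; rewrite inE //.
  exact: ltn_trans ij jN.
have sle i j : (i <= j)%N -> (j < N)%N -> s`_i <= s`_j.
  rewrite leq_eqVlt => /orP[/eqP -> //|ij jN]; exact: ltW (slt _ _ ij jN).
have s0 : s`_0 = 0.
  have : 0 \in s by rewrite s_mem thr_0.
  move=> /(nthP 0)[j jN ej]; have h1 := sle 0 j (leq0n j) jN; rewrite ej in h1.
  by apply/eqP; rewrite eq_le h1 s_ge0 // mem_nth.
pose B' k := if k is k'.+1 then kerp dZ s`_k' else 0.
pose h k := \rank (A :&: B' k + C)%MS.
have Bm i : (i < N)%N -> kerm dZ s`_i = B' i.
  case: i => [_|i iN] /=; first by rewrite s0 /kerm eqxx.
  have ii : s`_i < s`_i.+1 by apply: slt.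
  apply: kerm_thr => //.
  - by apply: le_lt_trans ii; apply: s_ge0; apply: mem_nth; exact: ltnW.
  - by rewrite -s_mem mem_nth // ltnW.
  - move=> y; rewrite -s_mem => /(nthP 0)[j jN <-] lt.
    apply: (sle _ _); last exact: ltnW. rewrite leqNgt; apply/negP => ij.
    by move: lt; rewrite ltNge (sle _ _ ij jN).
have Bmono k : (k < N)%N -> (B' k <= kerp dZ s`_k)%MS.
  by move=> iN; rewrite -(Bm k iN); exact: kerm_sub.
rewrite (big_nth 0) big_mkord -/N.
rewrite (eq_bigr (fun i : 'I_N => h i.+1 - h i)%N); last first.
  move=> i _; rewrite M0E (Bm i (ltn_ord i)) rank_id //; exact: Bmono.
rewrite tele; last first.
  move=> i iN; apply: mxrankS; apply: addsmxS => //; apply: capmxS => //.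
  exact: Bmono.
have -> : h 0 = \rank C by rewrite /h /= capmx0 adds0mx.
have -> : h N = \rank A.
  rewrite /h; case E: N N0 => [//|N'] _ /=.
  have top : (A <= kerp dZ s`_N')%MS.
    apply: kerp_top => i j.
    have : dZ i j \in s by rewrite s_mem thr_d.
    move=> /(nthP 0)[k kN <-]; have kN' : (k < N'.+1)%N by rewrite -E.
    by apply: (sle _ _) => //; rewrite E.
  apply: eqmx_rank; apply/andP; split; first by rewrite addsmx_sub capmxSl CA.
  apply: submx_trans (addsmxSl _ _); by rewrite sub_capmx submx_refl top.
done.
Qed.
End Main.

Lemma M0_sym (R : realFieldType) n (dX dZ : 'I_n -> 'I_n -> R) a b :
  M0 dX dZ a b = M0 dZ dX b a.
Proof.
rewrite /M0 /f0 !mulmx1.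
rewrite (capmxC (kerp dX a) (kerp dZ b)) (capmxC (kerm dX a) (kerp dZ b)).
by rewrite (capmxC (kerp dX a) (kerm dZ b)) addsmxC.
Qed.

Theorem lemma3 (R : realFieldType) (n : nat) (dX dZ : 'I_n -> 'I_n -> R)
  (dX_sym : forall i j, dX i j = dX j i) (dX_ge0 : forall i j, 0 <= dX i j)
  (dZ_sym : forall i j, dZ i j = dZ j i) (dZ_ge0 : forall i j, 0 <= dZ i j)
  (a b : R) (ha : 0 <= a) (hb : 0 <= b) :
  has_fsum (fun b' => M0 dX dZ a b') (mult dX a) /\
  has_fsum (fun a' => M0 dX dZ a' b) (mult dZ b).
Proof.
split; first exact: part1.
have [s [u al sup sm]] := part1 dZ_sym dZ_ge0 dX_ge0 hb.
exists s; split => //.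
  by move=> x x0; rewrite M0_sym; exact: sup.
by rewrite -sm; apply: eq_bigr => x _; rewrite M0_sym.
Qed.
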